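(* $(\mathcal D,\sqsubseteq)$ is a complete lattice.
   Context: Let $\mathcal V$ be a countably infinite set of variables. $\mathcal M$ is the set of maps $m:\mathcal V\to\mathbb N\cup\{\infty\}$, ordered pointwise ($m_1\sqsubseteq m_2$ iff $m_1(x)\le m_2(x)$ for all $x$). $\mathcal P$ is the set of discrete probability distributions on $\mathcal M$. For a subdistribution $\pi$ on $\mathcal M$ with total mass $|\pi|$, its weighting $\overline\pi:\mathcal V\to\mathbb R_{\ge0}\cup\{\infty\}$ is $\overline\pi(x)=\frac1{|\pi|}\sum_m\pi(m)m(x)$ if $|\pi|>0$, and $\overline\pi(x)=0$ otherwise. For $p_1,p_2\in\mathcal P$: $p_1\sqsubseteq p_2$ iff there is a coupling $\omega$ of $p_1,p_2$ (distribution on $\mathcal M\times\mathcal M$ with marginals $p_1$ and $p_2$) such that for all $m\in\mathcal M$, $\overline{\omega(\cdot,m)}(x)\le m(x)$ for all $x$, where $\omega(\cdot,m)$ is the subdistribution $m'\mapsto\omega(m',m)$. For $P\subseteq\mathcal P$, $\downarrow P=\{p\in\mathcal P\mid p\sqsubseteq p'\text{ for some }p'\in P\}$. $\mathcal D=\{P\subseteq\mathcal P\mid P\ne\emptyset,\ \downarrow P=P\}$, ordered by $P_1\sqsubseteq P_2$ iff for every $p_1\in P_1$ there is $p_2\in P_2$ with $p_1\sqsubseteq p_2$. *)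

(* Defs.v *)
From Stdlib Require Import Reals List ClassicalEpsilon.
Import ListNotations.
Open Scope R_scope.

(** Extended non-negative reals [0, +oo] (only used with non-negative reals). *)
Inductive ER : Type := ERfin (r : R) | ERinf.

Definition ERle (a b : ER) : Prop :=
  match a, b with
  | _, ERinf => True
  | ERinf, ERfin _ => False
  | ERfin x, ERfin y => x <= y
  end.

Definition ERadd (a b : ER) : ER :=
  match a, b with
  | ERfin x, ERfin y => ERfin (x + y)
  | _, _ => ERinf
  end.

(** Multiplication with the measure-theoretic convention 0 * oo = 0. *)
Definition ERmul (a b : ER) : ER :=
  match a, b with
  | ERfin x, ERfin y => ERfin (x * y)
  | ERfin x, ERinf => if Req_EM_T x 0 then ERfin 0 else ERinf
  | ERinf, ERfin y => if Req_EM_T y 0 then ERfin 0 else ERinf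
  | ERinf, ERinf => ERinf
  end.

Definition ER_is_lub (S : ER -> Prop) (s : ER) : Prop :=
  (forall a, S a -> ERle a s) /\ (forall b, (forall a, S a -> ERle a b) -> ERle s b).

Definition ERsup (S : ER -> Prop) : ER :=
  epsilon (inhabits ERinf) (fun s => ER_is_lub S s).

Definition usum {A : Type} (f : A -> ER) : ER :=
  ERsup (fun s => exists l : list A, NoDup l /\
           s = fold_right (fun a acc => ERadd (f a) acc) (ERfin 0) l).

(** N ∪ {oo}: [None] is oo. *)
Definition Ninf := option nat.

Definition Ninf_le (a b : Ninf) : Prop :=
  match a, b with
  | _, None => True
  | None, Some _ => False
  | Some x, Some y => (x <= y)%nat
  end.

Definition Ninf_to_ER (a : Ninf) : ER :=
  match a with Some n => ERfin (INR n) | None => ERinf end.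

Definition Mmap (V : Type) := V -> Ninf.

Definition Mle {V : Type} (m1 m2 : Mmap V) : Prop :=
  forall x, Ninf_le (m1 x) (m2 x).

Definition is_dist {A : Type} (p : A -> R) : Prop :=
  (forall a, 0 <= p a) /\
  (exists e : nat -> A, forall a, p a <> 0 -> exists n, e n = a) /\
  usum (fun a => ERfin (p a)) = ERfin 1.

Definition weighting {V : Type} (pi : Mmap V -> R) (x : V) : ER :=
  match usum (fun m => ERfin (pi m)) with
  | ERfin t =>
      if Rlt_dec 0 t then
        ERmul (ERfin (/ t)) (usum (fun m => ERmul (ERfin (pi m)) (Ninf_to_ER (m x))))
      else ERfin 0
  | ERinf => ERfin 0
  end.

Definition is_coupling {V : Type} (w : Mmap V * Mmap V -> R) (p1 p2 : Mmap V -> R) : Prop :=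
  is_dist w /\
  (forall m1, usum (fun m2 => ERfin (w (m1, m2))) = ERfin (p1 m1)) /\
  (forall m2, usum (fun m1 => ERfin (w (m1, m2))) = ERfin (p2 m2)).

Definition Ple {V : Type} (p1 p2 : Mmap V -> R) : Prop :=
  exists w, is_coupling w p1 p2 /\
    forall (m : Mmap V) (x : V),
      ERle (weighting (fun m' => w (m', m)) x) (Ninf_to_ER (m x)).

Definition PSet (V : Type) := (Mmap V -> R) -> Prop.

Definition downset {V : Type} (P : PSet V) : PSet V :=
  fun p => is_dist p /\ exists p', P p' /\ Ple p p'.

Definition inD {V : Type} (P : PSet V) : Prop :=
  (forall p, P p -> is_dist p) /\
  (exists p, P p) /\
  (forall p, downset P p <-> P p).

Definition Dle {V : Type} (P1 P2 : PSet V) : Prop :=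
  forall p1, P1 p1 -> exists p2, P2 p2 /\ Ple p1 p2.

Definition Deq {V : Type} (P1 P2 : PSet V) : Prop := forall p, P1 p <-> P2 p.

Definition is_complete_lattice_D (V : Type) : Prop :=
  (forall P : PSet V, inD P -> Dle P P) /\
  (forall P1 P2 P3 : PSet V, inD P1 -> inD P2 -> inD P3 ->
     Dle P1 P2 -> Dle P2 P3 -> Dle P1 P3) /\
  (forall P1 P2 : PSet V, inD P1 -> inD P2 ->
     Dle P1 P2 -> Dle P2 P1 -> Deq P1 P2) /\
  (forall S : PSet V -> Prop, (forall P, S P -> inD P) ->
     exists U, inD U /\ (forall P, S P -> Dle P U) /\
       (forall U', inD U' -> (forall P, S P -> Dle P U') -> Dle U U')) /\
  (forall S : PSet V -> Prop, (forall P, S P -> inD P) ->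
     exists L, inD L /\ (forall P, S P -> Dle L P) /\
       (forall L', inD L' -> (forall P, S P -> Dle L' P) -> Dle L' L)).

(* Main.v *)
Require Import Defs.
From Stdlib Require Import Reals List ClassicalEpsilon Lra Classical FunctionalExtensionality.
Import ListNotations.
Local Open Scope R_scope.

Lemma ERle_inf a : ERle a ERinf. Proof. destruct a; exact I. Qed.

Lemma ERle_antisym a b : ERle a b -> ERle b a -> a = b.
Proof. destruct a, b; simpl; intros; try contradiction; auto. f_equal; lra. Qed.

Lemma ER_lub_exists (S : ER -> Prop) : (exists a, S a) -> exists s, ER_is_lub S s.
Proof.
  intros ne.
  destruct (classic (S ERinf)) as [Hi|Hi].
  { exists ERinf; split; [intros; apply ERle_inf| intros b Hb; apply Hb; auto]. }
  destruct (classic (exists M, forall r, S (ERfin r) -> r <= M)) as [[M HM]|Hu].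
  - destruct (completeness (fun r => S (ERfin r))) as [l Hl].
    + exists M; intros r Hr; apply HM; exact Hr.
    + destruct ne as [[r|] Hr]; [exists r; exact Hr| contradiction].
    + exists (ERfin l); split.
      * intros [r|] Ha; [simpl; apply (proj1 Hl); exact Ha | contradiction].
      * intros [y|] Hb; simpl; [|trivial].
        apply (proj2 Hl); intros r Hr; apply (Hb _ Hr).
  - exists ERinf; split; [intros; apply ERle_inf|].
    intros [y|] Hb; [exfalso; apply Hu; exists y; intros r Hr; apply (Hb _ Hr)| exact I].
Qed.

Definition psums {A : Type} (f : A -> ER) : ER -> Prop :=
  fun s => exists l : list A, NoDup l /\
           s = fold_right (fun a acc => ERadd (f a) acc) (ERfin 0) l.

Lemma usum_spec {A : Type} (f : A -> ER) : ER_is_lub (psums f) (usum f).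
Proof.
  unfold usum, ERsup. apply epsilon_spec. apply ER_lub_exists.
  exists (ERfin 0), []. split; [constructor | reflexivity].
Qed.

Lemma usum_eq {A : Type} (f : A -> ER) s : ER_is_lub (psums f) s -> usum f = s.
Proof.
  intros H. destruct (usum_spec f) as [H1 H2]. destruct H as [H3 H4].
  apply ERle_antisym; [apply H2; exact H3 | apply H4; exact H1].
Qed.

Lemma usum_zero {A : Type} : usum (fun _ : A => ERfin 0) = ERfin 0.
Proof.
  apply usum_eq. split.
  - intros s [l [_ ->]]. induction l; simpl; [lra|].
    destruct (fold_right _ _ l); simpl in *; lra.
  - intros b Hb. apply Hb. exists []; split; [constructor|reflexivity].
Qed.

Lemma ERadd_0_l s : ERadd (ERfin 0) s = s.
Proof. destruct s; simpl; auto. f_equal; lra. Qed.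
Lemma ERadd_0_r s : ERadd s (ERfin 0) = s.
Proof. destruct s; simpl; auto. f_equal; lra. Qed.

Lemma usum_single {A : Type} (f : A -> ER) (a : A) :
  (forall b, b <> a -> f b = ERfin 0) -> ERle (ERfin 0) (f a) -> usum f = f a.
Proof.
  intros Hz Hp.
  assert (Hs : forall l, NoDup l ->
     (In a l -> fold_right (fun a acc => ERadd (f a) acc) (ERfin 0) l = f a) /\
     (~ In a l -> fold_right (fun a acc => ERadd (f a) acc) (ERfin 0) l = ERfin 0)).
  { induction l as [|b l IH]; intros Hn; simpl.
    - split; [intros []| auto].
    - inversion Hn as [|? ? Hb Hn']; subst. destruct (IH Hn') as [I1 I2].
      split.
      + intros [->|Hi].
        * rewrite I2 by exact Hb. apply ERadd_0_r.
        * assert (b <> a) by (intros ->; contradiction).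
          rewrite Hz by assumption. rewrite ERadd_0_l. auto.
      + intros Hi. assert (b <> a) by auto.
        rewrite Hz by assumption. rewrite ERadd_0_l. auto. }
  apply usum_eq. split.
  - intros s [l [Hn ->]]. destruct (Hs l Hn) as [I1 I2].
    destruct (classic (In a l)) as [Hi|Hi].
    + rewrite I1 by auto. destruct (f a); simpl; auto; lra.
    + rewrite I2 by auto. exact Hp.
  - intros b Hb. apply Hb. exists [a]. split.
    + constructor; [intros []|constructor].
    + simpl. symmetry. apply ERadd_0_r.
Qed.

Fixpoint pull {A B : Type} (h : B -> A) (l : list A) : list B :=
  match l with
  | [] => []
  | a :: l' => match excluded_middle_informative (exists b, h b = a) with
               | left H => proj1_sig (constructive_indefinite_description _ H) :: pull h l'
               | right _ => pull h l'
               end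
  end.

Lemma pull_in {A B : Type} (h : B -> A) l b : In b (pull h l) -> In (h b) l.
Proof.
  induction l as [|a l IH]; simpl; [auto|].
  destruct (excluded_middle_informative _) as [H|H]; simpl.
  - destruct (constructive_indefinite_description _ H) as [b' Hb']; simpl.
    intros [->|Hi]; auto.
  - intros Hi; auto.
Qed.

Lemma pull_nodup {A B : Type} (h : B -> A) l : NoDup l -> NoDup (pull h l).
Proof.
  induction l as [|a l IH]; simpl; intros Hn; [constructor|].
  inversion Hn; subst.
  destruct (excluded_middle_informative _) as [H|H]; simpl; auto.
  destruct (constructive_indefinite_description _ H) as [b' Hb']; simpl.
  constructor; auto. intros Hi. apply pull_in in Hi. subst. contradiction.
Qed.

Lemma usum_reindex {A B : Type} (h : B -> A) (f : A -> ER) :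
  (forall b1 b2, h b1 = h b2 -> b1 = b2) ->
  (forall a, (forall b, h b <> a) -> f a = ERfin 0) ->
  usum f = usum (fun b => f (h b)).
Proof.
  intros Hinj Hz. apply usum_eq.
  destruct (usum_spec (fun b => f (h b))) as [U1 U2]. split.
  - intros s [l [Hn ->]]. apply U1. exists (pull h l). split; [apply pull_nodup; auto|].
    clear Hn. induction l as [|a l IH]; simpl; auto.
    destruct (excluded_middle_informative _) as [H|H]; simpl.
    + destruct (constructive_indefinite_description _ H) as [b' Hb']; simpl.
      rewrite Hb', IH; auto.
    + rewrite Hz, IH, ERadd_0_l; auto. intros b Hb; apply H; eauto.
  - intros b Hb. apply U2. intros s [l [Hn ->]]. apply Hb.
    exists (map h l). split.
    + clear Hb. induction l; simpl; constructor; inversion Hn; subst; auto.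
      intros Hi. apply in_map_iff in Hi. destruct Hi as [x [Hx Hi]].
      apply Hinj in Hx; subst; contradiction.
    + clear. induction l; simpl; auto. rewrite IHl; auto.
Qed.

Definition dec (P : Prop) := excluded_middle_informative P.

Section S.
Context {V : Type}.

Definition wdiag (p : Mmap V -> R) (q : Mmap V * Mmap V) : R :=
  if dec (fst q = snd q) then p (fst q) else 0.

Lemma ERle_0_N (a : Ninf) : ERle (ERfin 0) (Ninf_to_ER a).
Proof. destruct a; simpl; auto. apply pos_INR. Qed.

Lemma ERmul_0_l y : ERmul (ERfin 0) y = ERfin 0.
Proof. destruct y; simpl. f_equal; lra. destruct (Req_EM_T 0 0); auto; lra. Qed.

Lemma Ple_refl (p : Mmap V -> R) : is_dist p -> Ple p p.
Proof.
  intros [Hp0 [[e He] Hp1]].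
  assert (Hm1 : forall m1, usum (fun m2 => ERfin (wdiag p (m1, m2))) = ERfin (p m1)).
  { intros m1. rewrite (usum_single _ m1).
    - unfold wdiag; simpl. destruct (dec (m1 = m1)); [auto|congruence].
    - intros b Hb. unfold wdiag; simpl. destruct (dec (m1 = b)); [congruence|auto].
    - unfold wdiag; simpl. destruct (dec (m1 = m1)); simpl; auto; lra. }
  assert (Hm2 : forall m2, usum (fun m1 => ERfin (wdiag p (m1, m2))) = ERfin (p m2)).
  { intros m2. rewrite (usum_single _ m2).
    - unfold wdiag; simpl. destruct (dec (m2 = m2)); [auto|congruence].
    - intros b Hb. unfold wdiag; simpl. destruct (dec (b = m2)); [congruence|auto].
    - unfold wdiag; simpl. destruct (dec (m2 = m2)); simpl; auto; lra. }
  exists (wdiag p). split; [split; [|split; auto]|].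
  - split; [|split].
    + intros [a b]; unfold wdiag; simpl; destruct (dec _); auto; lra.
    + exists (fun n => (e n, e n)). intros [a b]; unfold wdiag; simpl.
      destruct (dec (a = b)) as [->|]; [|tauto].
      intros Hn. destruct (He b Hn) as [n Hn']. exists n; rewrite Hn'; auto.
    + rewrite (usum_reindex (fun m => (m, m))).
      * rewrite <- Hp1. f_equal. apply functional_extensionality; intros m.
        unfold wdiag; simpl. destruct (dec (m = m)); congruence.
      * intros b1 b2 H; injection H; auto.
      * intros [a b] H. unfold wdiag; simpl. destruct (dec (a = b)) as [->|]; auto.
        exfalso; apply (H b); auto.
  - intros m x. unfold weighting. rewrite Hm2.
    destruct (Rlt_dec 0 (p m)) as [Hlt|]; [|apply ERle_0_N].
    rewrite (usum_single _ m).
    + unfold wdiag; simpl. destruct (dec (m = m)); [|congruence].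
      destruct (m x) as [n|]; simpl; [|apply ERle_inf].
      right. field. lra.
    + intros b Hb. unfold wdiag; simpl. destruct (dec (b = m)); [congruence|].
      apply ERmul_0_l.
    + unfold wdiag; simpl. destruct (dec (m = m)); [|congruence].
      destruct (m x) as [n|]; simpl.
      * apply Rmult_le_pos; [lra| apply pos_INR].
      * destruct (Req_EM_T _ 0); simpl; auto; lra.
Qed.

Definition m0 : Mmap V := fun _ => Some 0%nat.
Definition d0 (m : Mmap V) : R := if dec (m = m0) then 1 else 0.
Definition wbot (p : Mmap V -> R) (q : Mmap V * Mmap V) : R :=
  if dec (fst q = m0) then p (snd q) else 0.

Lemma d0_dist : is_dist d0.
Proof.
  split; [|split].
  - intros m; unfold d0; destruct (dec _); lra.
  - exists (fun _ => m0). intros a; unfold d0; destruct (dec (a = m0)); [|tauto].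
    intros; exists 0%nat; auto.
  - rewrite (usum_single _ m0); unfold d0.
    + destruct (dec (m0 = m0)); [auto|congruence].
    + intros b Hb; destruct (dec (b = m0)); [congruence|auto].
    + destruct (dec (m0 = m0)); simpl; lra.
Qed.

Lemma Ple_bot (p : Mmap V -> R) : is_dist p -> Ple d0 p.
Proof.
  intros [Hp0 [[e He] Hp1]].
  assert (Hm2 : forall m2, usum (fun m1 => ERfin (wbot p (m1, m2))) = ERfin (p m2)).
  { intros m2. rewrite (usum_single _ m0).
    - unfold wbot; simpl. destruct (dec (m0 = m0)); [auto|congruence].
    - intros b Hb. unfold wbot; simpl. destruct (dec (b = m0)); [congruence|auto].
    - unfold wbot; simpl. destruct (dec (m0 = m0)); simpl; auto; lra. }
  exists (wbot p). split; [split; [|split; auto]|].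
  - split; [|split].
    + intros [a b]; unfold wbot; simpl; destruct (dec _); auto; lra.
    + exists (fun n => (m0, e n)). intros [a b]; unfold wbot; simpl.
      destruct (dec (a = m0)) as [->|]; [|tauto].
      intros Hn. destruct (He b Hn) as [n Hn']. exists n; rewrite Hn'; auto.
    + rewrite (usum_reindex (fun m => (m0, m))).
      * rewrite <- Hp1. f_equal. apply functional_extensionality; intros m.
        unfold wbot; simpl. destruct (dec (m0 = m0)); congruence.
      * intros b1 b2 H; injection H; auto.
      * intros [a b] H. unfold wbot; simpl. destruct (dec (a = m0)) as [->|]; auto.
        exfalso; apply (H b); auto.
  - intros m1. unfold d0, wbot; simpl. destruct (dec (m1 = m0)).
    + exact Hp1.
    + apply usum_zero.
  - intros m x. unfold weighting.
    replace (fun m' => ERmul (ERfin (wbot p (m', m))) (Ninf_to_ER (m' x)))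
      with (fun _ : Mmap V => ERfin 0).
    + rewrite usum_zero, Hm2. destruct (Rlt_dec 0 (p m));
      simpl; try rewrite Rmult_0_r; apply ERle_0_N.
    + apply functional_extensionality; intros m'. unfold wbot; simpl.
      destruct (dec (m' = m0)) as [->|].
      * unfold m0; simpl. f_equal; lra.
      * symmetry; apply ERmul_0_l.
Qed.

End S.

Lemma sub_of_Dle {V : Type} (P1 P2 : PSet V) :
  inD P1 -> inD P2 -> Dle P1 P2 -> forall p, P1 p -> P2 p.
Proof.
  intros H1 H2 H p Hp. destruct (H p Hp) as [p2 [Hp2 Hl]].
  apply (proj2 (proj2 H2) p). split; [apply (proj1 H1); auto| exists p2; auto].
Qed.

Lemma Dle_of_sub {V : Type} (P1 P2 : PSet V) :
  inD P2 -> (forall p, P1 p -> P2 p) -> Dle P1 P2.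
Proof.
  intros H2 H p Hp. apply H in Hp. apply (proj2 (proj2 H2) p) in Hp.
  destruct Hp as [_ [p' Hp']]. exists p'; auto.
Qed.

Lemma d0_in {V : Type} (Q : PSet V) : inD Q -> Q d0.
Proof.
  intros HQ. destruct HQ as [Hd [[q Hq] Hdn]].
  apply Hdn. split; [apply d0_dist|]. exists q; split; auto. apply Ple_bot; auto.
Qed.

Theorem proposition4 (V : Type)
  (HV : exists (f : V -> nat) (g : nat -> V),
          (forall v, g (f v) = v) /\ (forall n, f (g n) = n)) :
  is_complete_lattice_D V.
Proof.
  clear HV. split; [|split; [|split; [|split]]].
  - intros P HP. apply Dle_of_sub; auto.
  - intros P1 P2 P3 H1 H2 H3 A B. apply Dle_of_sub; auto.
    intros p Hp. apply (sub_of_Dle P2 P3); auto. apply (sub_of_Dle P1 P2); auto.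
  - intros P1 P2 H1 H2 A B p. split; [apply (sub_of_Dle P1 P2)|apply (sub_of_Dle P2 P1)]; auto.
  - intros S HS.
    set (U := fun p => is_dist p /\ ((exists P, S P /\ P p) \/ (forall Q, inD Q -> Q p))).
    assert (HU : inD U).
    { split; [|split].
      - intros p [Hp _]; auto.
      - exists d0. split; [apply d0_dist|]. right. intros Q HQ; apply d0_in; auto.
      - intros p; split.
        + intros [Hp [p' [[_ [[P [HSP HP]]|Hall]] Hl]]]; split; auto.
          * left. exists P; split; auto. apply (proj2 (proj2 (HS P HSP))). split; [exact Hp| exists p'; split; assumption].
          * right. intros Q HQ. apply (proj2 (proj2 HQ)). split; [exact Hp| exists p'; split; [apply Hall; exact HQ| assumption]].
        + intros Hp. split; [apply (proj1 Hp)|]. exists p; split; auto.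
          apply Ple_refl; apply (proj1 Hp). }
    exists U. split; [auto|split].
    + intros P HSP. apply Dle_of_sub; auto. intros p Hp. split.
      * apply (proj1 (HS P HSP)); auto.
      * left; eauto.
    + intros U' HU' Hub. apply Dle_of_sub; auto.
      intros p [Hp [[P [HSP HP]]|Hall]].
      * apply (sub_of_Dle P U'); auto.
      * apply Hall; auto.
  - intros S HS.
    set (L := fun p => is_dist p /\ (forall P, S P -> P p)).
    assert (HL : inD L).
    { split; [|split].
      - intros p [Hp _]; auto.
      - exists d0. split; [apply d0_dist|]. intros P HP; apply d0_in; auto.
      - intros p; split.
        + intros [Hp [p' [[_ Hall] Hl]]]; split; auto.
          intros P HSP. apply (proj2 (proj2 (HS P HSP))). split; [exact Hp| exists p'; split; [apply Hall; exact HSP| assumption]].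
        + intros Hp. split; [apply (proj1 Hp)|]. exists p; split; auto.
          apply Ple_refl; apply (proj1 Hp). }
    exists L. split; [auto|split].
    + intros P HSP. apply Dle_of_sub; auto. intros p Hp. exact (proj2 Hp P HSP).
    + intros L' HL' Hlb. apply Dle_of_sub; auto. intros p Hp. split.
      * apply (proj1 HL'); auto.
      * intros P HSP. apply (sub_of_Dle L' P); auto.
Qed.
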